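(* Let $\mathbb{D}$ be a domain, and let $\mathbb{D}_1, \mathbb{D}_2 \subseteq \mathbb{D}$ be disjoint. For a data set $D$ write $D_1 = D \cap \mathbb{D}_1$ and $D_2 = D \cap \mathbb{D}_2$. Let $M_1$ be an $f_1$-differentially private mechanism and $M_2$ an $f_2$-differentially private mechanism, where $M_2$ takes as input an auxiliary value $y_1$ (an output of $M_1$) together with a data set, and is $f_2$-differentially private in its data argument for every value of $y_1$. Define the joint mechanism $M(D) := (y_1, M_2(y_1, D_2))$ where $y_1 := M_1(D_1)$. Then $M$ is $\mathrm{lce}\{f_1, f_2\}$-differentially private.
   Context: An attribute is a finite set; a domain is $\mathbb{D} = A_1 \times \cdots \times A_m$ for attributes $A_i$; elements of $\mathbb{D}$ are rows. A data set is an element of $\mathbb{N}^{|\mathbb{D}|}$ (a histogram/multiset of rows); for $\mathbb{D}' \subseteq \mathbb{D}$, $D \cap \mathbb{D}'$ is the data set consisting of the rows of $D$ lying in $\mathbb{D}'$. Two data sets are neighboring ($D \sim D'$) if they differ in a single row. For distributions $P,P'$ on the same space, the trade-off function is $T(P,P')(\alpha) := \inf\{\beta_\phi : \alpha_\phi \le \alpha\}$ over measurable rejection rules $0\le\phi\le 1$, with $\alpha_\phi = \mathbb{E}_P[\phi]$, $\beta_\phi = 1-\mathbb{E}_{P'}[\phi]$; a trade-off function is any function of this form. For a trade-off function $f$, a mechanism $M$ is $f$-differentially private if $T(M(D), M(D')) \ge f$ pointwise on $[0,1]$ for all neighboring $D, D'$ (where $M(D)$ denotes the output distribution). The lower convex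 envelope is $\mathrm{lce}\{f_1,f_2\}(x) := \sup\{f(x) : f \text{ convex}, f \le \min\{f_1,f_2\}\}$. *)

(* Defs.v *)
From HB Require Import structures.
From mathcomp Require Import all_boot all_order all_algebra.
From mathcomp Require Import all_classical all_reals all_analysis measurable_realfun.

Set Implicit Arguments.
Unset Strict Implicit.
Unset Printing Implicit Defensive.

Import Order.TTheory GRing.Theory Num.Theory.
Local Open Scope classical_set_scope.
Local Open Scope ring_scope.

(* The domain is a finite type [T] of rows; a data set is a histogram. *)
Definition dataset (T : finType) := {ffun T -> nat}.

Definition restr (T : finType) (D : dataset T) (S : {set T}) : dataset T :=
  [ffun x => if x \in S then D x else 0%N].

Definition neighbors (T : finType) (D D' : dataset T) : Prop :=
  exists x : T,
    (forall y, D' y = (D y + (y == x))%N) \/ (forall y, D y = (D' y + (y == x))%N).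

Definition tradeoff (R : realType) d (Y : measurableType d)
    (P P' : set Y -> \bar R) (a : R) : R :=
  inf [set b : R | exists phi : Y -> R,
        [/\ measurable_fun setT phi,
            (forall y, 0 <= phi y <= 1),
            fine (\int[P]_y (phi y)%:E) <= a &
            b = 1 - fine (\int[P']_y (phi y)%:E)]].

Definition is_tradeoff (R : realType) (f : R -> R) : Prop :=
  exists (d : measure_display) (Y : measurableType d) (P P' : probability Y R),
    forall a, a \in `[0, 1] -> f a = tradeoff (P : set Y -> \bar R) P' a.

Definition fDP (R : realType) (T : finType) d (Y : measurableType d)
    (f : R -> R) (M : dataset T -> set Y -> \bar R) : Prop :=
  forall D D', neighbors D D' ->
    forall a, a \in `[0, 1] -> f a <= tradeoff (M D) (M D') a.

Definition lce (R : realType) (f1 f2 : R -> R) (x : R) : R :=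
  sup [set v : R | exists g : R -> R,
        [/\ convex_function (E := R^o) `[0, 1] g,
            (forall t, t \in `[0, 1] -> g t <= Num.min (f1 t) (f2 t)) &
            v = g x]].

(* Output distribution of the joint mechanism M(D) = (y1, M2(y1, D2)),
   y1 = M1(D1):  M(D)(A) = \int_{y1} M2(y1, D2)({y2 | (y1,y2) \in A}) dM1(D1). *)
Definition joint_mech (R : realType) (T : finType) d1 d2
    (Y1 : measurableType d1) (Y2 : measurableType d2)
    (M1 : dataset T -> probability Y1 R) (M2 : Y1 -> dataset T -> probability Y2 R)
    (S1 S2 : {set T}) (D : dataset T) : set (Y1 * Y2) -> \bar R :=
  fun A => (\int[M1 (restr D S1)]_y1 M2 y1 (restr D S2) (xsection A y1))%E.

Definition aux_measurable (R : realType) (T : finType) d1 d2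
    (Y1 : measurableType d1) (Y2 : measurableType d2)
    (M2 : Y1 -> dataset T -> probability Y2 R) : Prop :=
  forall (D : dataset T) (B : set Y2), measurable B ->
    measurable_fun setT (fun y1 => M2 y1 D B).

(* Main.v *)
Require Import Defs.
From HB Require Import structures.
From mathcomp Require Import all_boot all_order all_algebra.
From mathcomp Require Import all_classical all_reals all_analysis measurable_realfun.
From mathcomp Require Import ring lra.

Import Order.TTheory GRing.Theory Num.Theory.
Local Open Scope ring_scope.

Module Helpers.
Set Implicit Arguments.
Unset Strict Implicit.
Local Open Scope classical_set_scope.
Local Open Scope ring_scope.
Section S2.
Local Open Scope ereal_scope.
End S2.
Local Open Scope ereal_scope.

Section JK.
Context (R : realType) d1 d2 (Y1 : measurableType d1) (Y2 : measurableType d2).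
Variable N : Y1 -> probability Y2 R.

Definition JK (y : Y1) : set (Y1 * Y2) -> \bar R := fun A => N y (xsection A y).

Let JK0 y : JK y set0 = 0.
Proof. by rewrite /JK xsection0 measure0. Qed.
Let JK_ge0 y A : 0 <= JK y A.
Proof. exact: measure_ge0. Qed.
Let JK_sigma y : semi_sigma_additive (JK y).
Proof.
move=> F mF tF mUF; rewrite /JK xsection_bigcup.
apply: measure_semi_sigma_additive.
- by move=> n; exact: measurable_xsection.
- exact: trivIset_xsection.
- by rewrite -xsection_bigcup; exact: measurable_xsection.
Qed.
HB.instance Definition _ y := isMeasure.Build _ _ _ (JK y) (JK0 y) (JK_ge0 y) (@JK_sigma y).
End JK.
Arguments JK {R d1 d2 Y1 Y2}.

Definition K2 (R : realType) d1 d2 (Y1 : measurableType d1) (Y2 : measurableType d2)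
  (N : Y1 -> probability Y2 R)
  (mN : forall B, measurable B -> measurable_fun setT (fun y => N y B)) :
  Y1 -> {measure set Y2 -> \bar R} := fun y => N y.
Arguments K2 {R d1 d2 Y1 Y2 N}.

Section K2.
Context (R : realType) d1 d2 (Y1 : measurableType d1) (Y2 : measurableType d2)
  (N : Y1 -> probability Y2 R)
  (mN : forall B, measurable B -> measurable_fun setT (fun y => N y B)).
Let mK2 U : measurable U -> measurable_fun [set: Y1] (K2 mN ^~ U).
Proof. exact: mN. Qed.
HB.instance Definition _ := isKernel.Build _ _ _ _ _ (K2 mN) mK2.
Let K2prob x : K2 mN x [set: Y2] = 1.
Proof. exact: (probability_setT (N x)). Qed.
HB.instance Definition _ := Kernel_isProbability.Build _ _ _ _ _ (K2 mN) K2prob.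
End K2.

Definition KP (R : realType) d1 d2 (Y1 : measurableType d1) (Y2 : measurableType d2)
  (N : Y1 -> probability Y2 R)
  (mN : forall B, measurable B -> measurable_fun setT (fun y => N y B)) :
  unit * Y1 -> {measure set (Y1 * Y2) -> \bar R} := fun p => JK N p.2.
Arguments KP {R d1 d2 Y1 Y2 N}.

Section KP.
Context (R : realType) d1 d2 (Y1 : measurableType d1) (Y2 : measurableType d2)
  (N : Y1 -> probability Y2 R)
  (mN : forall B, measurable B -> measurable_fun setT (fun y => N y B)).
Let mKP U : measurable U -> measurable_fun [set: unit * Y1] (KP mN ^~ U).
Proof.
move=> mU.
have := @measurable_fun_xsection_finite_kernel _ _ Y1 Y2 R (K2 mN) U.
rewrite inE => /(_ mU) h.
rewrite (_ : KP mN ^~ U = (fun y => K2 mN y (xsection U y)) \o snd) //.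
exact: measurableT_comp.
Qed.
HB.instance Definition _ := isKernel.Build _ _ _ _ _ (KP mN) mKP.
Let KPprob x : KP mN x [set: Y1 * Y2] = 1.
Proof.
rewrite /KP /= /JK (_ : xsection _ _ = setT) ?probability_setT //.
by apply/seteqP; split => // z _; rewrite /xsection /= in_setT.
Qed.
HB.instance Definition _ := Kernel_isProbability.Build _ _ _ _ _ (KP mN) KPprob.
End KP.

Definition KL (R : realType) d1 (Y1 : measurableType d1) (P : probability Y1 R) :
  unit -> {measure set Y1 -> \bar R} := fun _ => P.
Arguments KL {R d1 Y1}.
Section KL.
Context (R : realType) d1 (Y1 : measurableType d1) (P : probability Y1 R).
Let mKL U : measurable U -> measurable_fun [set: unit] (KL P ^~ U).
Proof. by move=> mU; exact: measurable_cst. Qed.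
HB.instance Definition _ := isKernel.Build _ _ _ _ _ (KL P) mKL.
Let KLprob x : KL P x [set: Y1] = 1.
Proof. exact: (probability_setT P). Qed.
HB.instance Definition _ := Kernel_isProbability.Build _ _ _ _ _ (KL P) KLprob.
End KL.


Lemma JM_int (R : realType) d1 d2 (Y1 : measurableType d1) (Y2 : measurableType d2)
  (N : Y1 -> probability Y2 R)
  (mN : forall B, measurable B -> measurable_fun setT (fun y => N y B))
  (P : probability Y1 R) (phi : Y1 * Y2 -> R) :
  measurable_fun setT phi -> (forall z, (0 <= phi z)%R) ->
  \int[(fun A => \int[P]_y N y (xsection A y))]_z (phi z)%:E =
  \int[P]_y \int[N y]_z (phi (y, z))%:E.
Proof.
move=> mphi phi0.
transitivity (\int[kcomp (KL P) (KP mN) tt]_z (phi z)%:E).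
  have -> : (fun A => \int[P]_y N y (xsection A y)) = kcomp (KL P) (KP mN) tt by [].
  by [].
rewrite integral_kcomp; last 2 first.
- by move=> z /=; rewrite lee_fin.
- exact/measurable_EFinP.
apply: eq_integral => y _.
transitivity (\int[pushforward (N y) (pair y)]_z (phi z)%:E).
  by apply: eq_measure_integral => A _ _; rewrite /= /JK xsectionE.
rewrite ge0_integral_pushforward//.
- exact/measurable_EFinP.
- by move=> z _; rewrite lee_fin.
Qed.

Local Close Scope ereal_scope.
Local Open Scope ring_scope.

Definition convI (R : realType) (m : R -> R) := forall x y t : R,
  0 <= x <= 1 -> 0 <= y <= 1 -> 0 <= t <= 1 ->
  m (t * x + (1 - t) * y) <= t * m x + (1 - t) * m y.
Arguments convI {R}.

Lemma conv_ext (R : realType) (g : R -> R) :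
  convex_function (E := R^o) `[0, 1] g -> convI g.
Proof.
move=> H x y t /andP[x0 x1] /andP[y0 y1] /andP[t0 t1].
have := H (Itv01 t0 t1) x y.
rewrite !inE /= !in_itv /= x0 x1 y0 y1 => /(_ isT isT).
by [].
Qed.

Lemma three_chord (R : realType) (m : R -> R) t a u : convI m ->
  0 <= t -> t < a -> a < u -> u <= 1 ->
  (m a - m t) / (a - t) <= (m u - m a) / (u - a).
Proof.
move=> H t0 ta au u1.
have ut : 0 < u - t by lra.
pose l := (u - a) / (u - t).
have l0 : 0 <= l <= 1.
  apply/andP; split; first by rewrite /l divr_ge0 //; lra.
  by rewrite /l ler_pdivrMr //; lra.
have ha : a = l * t + (1 - l) * u.
  rewrite /l; field; lra.
have := H t u l.
rewrite -ha => /(_ ltac:(apply/andP; lra) ltac:(apply/andP; lra) l0) key.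
have key2 : (u - t) * m a <= (u - a) * m t + (a - t) * m u.
  have := ler_wpM2l (ltW ut) key.
  have -> : (u - t) * (l * m t + (1 - l) * m u) = (u - a) * m t + (a - t) * m u.
    rewrite /l; field; lra.
  by [].
rewrite ler_pdivrMr; last lra.
rewrite mulrAC ler_pdivlMr; last lra.
nra.
Qed.

Lemma support_line (R : realType) (m : R -> R) a : convI m ->
  0 < a -> a < 1 -> m 1 <= m a ->
  exists s, s <= 0 /\ forall t, 0 <= t <= 1 -> m a + s * (t - a) <= m t.
Proof.
move=> H a0 a1 m1a.
pose L := [set (m a - m t) / (a - t) | t in [set t | 0 <= t < a]].
have L0 : L !=set0 by exists ((m a - m 0) / (a - 0)); exists 0 => //=; rewrite lexx a0.
have Lub u : a < u -> u <= 1 -> ubound L ((m u - m a) / (u - a)).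
  move=> au u1 _ [t /= /andP[t0 ta] <-]; exact: three_chord.
have hs : has_sup L by split => //; exists ((m 1 - m a) / (1 - a)); exact: Lub.
exists (sup L); split.
  apply: (le_trans (ge_sup L0 (Lub 1 a1 (lexx _)))).
  by rewrite pmulr_lle0 ?invr_gt0 ?subr_gt0 // subr_le0.
move=> t /andP[t0 t1].
have [ta|ta|->] := ltgtP t a; last by rewrite subrr mulr0 addr0.
- have : (m a - m t) / (a - t) <= sup L.
    by apply: sup_upper_bound => //; exists t => //=; rewrite t0 ta.
  rewrite ler_pdivrMr; last lra.
  nra.
- have : sup L <= (m t - m a) / (t - a) by exact: ge_sup L0 (Lub t ta t1).
  rewrite ler_pdivlMr; last lra.
  nra.
Qed.


Section trade.
Context (R : realType) d (Y : measurableType d).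

Lemma bnd_int (P : probability Y R) (h : Y -> R) : measurable_fun setT h -> (forall y, 0 <= h y <= 1) ->
  P.-integrable setT (EFin \o h).
Proof.
move=> mh h01; apply: measurable_bounded_integrable => //.
  apply: (le_lt_trans (probability_le1 P measurableT)); exact: ltry.
exists 1; split => // M M1 y _.
have /andP[h0 h1] := h01 y.
rewrite /= ger0_norm //; lra.
Qed.

Lemma Rint01 (P : probability Y R) (h : Y -> R) : measurable_fun setT h -> (forall y, 0 <= h y <= 1) ->
  0 <= fine (\int[P]_y (h y)%:E)%E <= 1.
Proof.
move=> mh h01; apply/andP; split.
  change (0 <= Rintegral P setT h); apply: Rintegral_ge0 => y _.
  by case/andP: (h01 y).
change (Rintegral P setT h <= 1).
have -> : 1 = Rintegral P setT (fun=> 1).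
  rewrite Rintegral_cst // [fine _](_ : _ = 1) ?mul1r //; exact: (congr1 fine (probability_setT P)).
apply: le_Rintegral => //.
- exact: bnd_int.
- exact: finite_measure_integrable_cst.
- by move=> y _; case/andP: (h01 y).
Qed.

Lemma Rint_cst (P : probability Y R) (c : R) : fine (\int[P]_y (c%:E))%E = c.
Proof.
change (Rintegral P setT (fun=> c) = c).
rewrite Rintegral_cst // [fine _](_ : _ = 1) ?mulr1 //; exact: (congr1 fine (probability_setT P)).
Qed.

Lemma trade_le (P P' : probability Y R) (phi : Y -> R) a : measurable_fun setT phi -> (forall y, 0 <= phi y <= 1) ->
  fine (\int[P]_y (phi y)%:E)%E <= a ->
  tradeoff P P' a <= 1 - fine (\int[P']_y (phi y)%:E)%E.
Proof.
move=> mphi phi01 hPa; apply: ge_inf.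
  exists 0 => _ [psi [mpsi psi01 _ ->]].
  have /andP[_ ] := Rint01 P' mpsi psi01; lra.
by exists phi; split.
Qed.

Lemma trade_ge0 (P P' : probability Y R) a : 0 <= a -> 0 <= tradeoff P P' a.
Proof.
move=> a0; apply: lb_le_inf.
  exists (1 - fine (\int[P']_y ((cst 0 : Y -> R) y)%:E)%E); exists (cst 0); split.
  - exact: measurable_cst.
  - by move=> y; rewrite lexx ler01.
  - by rewrite Rint_cst.
  - by [].
move=> _ [psi [mpsi psi01 _ ->]].
have /andP[_ ] := Rint01 P' mpsi psi01; lra.
Qed.

Lemma trade_le1 (P P' : probability Y R) a : 0 <= a <= 1 -> tradeoff P P' a <= 1 - a.
Proof.
move=> /andP[a0 a1].
have := @trade_le P P' (cst a) a (measurable_cst _).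
rewrite !Rint_cst; apply => //.
by move=> y; rewrite a0 a1.
Qed.

End trade.

Lemma tradeoff_props (R : realType) (f : R -> R) : is_tradeoff f ->
  forall t, t \in `[0, 1] -> 0 <= f t /\ f t <= 1 - t.
Proof.
move=> [d [Y [P [P' hf]]]] t ht; rewrite hf //.
move: ht; rewrite in_itv /= => /andP[t0 t1]; split.
- exact: trade_ge0.
- by apply: trade_le1; rewrite t0 t1.
Qed.


Section aux.
Context (R : realType) d (Y : measurableType d).

Lemma bnd_intC (P : probability Y R) (h : Y -> R) C : measurable_fun setT h ->
  (forall y, `|h y| <= C) -> P.-integrable setT (EFin \o h).
Proof.
move=> mh hC; apply: measurable_bounded_integrable => //.
  apply: (le_lt_trans (probability_le1 P measurableT)); exact: ltry.
exists C; split; first by rewrite num_real.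
move=> M CM y _ /=; apply: le_trans (hC y) _; exact: ltW.
Qed.

Lemma Rint_aff (P : probability Y R) (h : Y -> R) c k : measurable_fun setT h ->
  (forall y, 0 <= h y <= 1) ->
  fine (\int[P]_y (c + k * h y)%:E)%E = c + k * fine (\int[P]_y (h y)%:E)%E.
Proof.
move=> mh h01.
have ih := bnd_int P mh h01.
change (Rintegral P setT (fun y => c + k * h y) = c + k * Rintegral P setT h).
rewrite RintegralD //; last 2 first.
- exact: finite_measure_integrable_cst.
- apply: (@bnd_intC P _ `|k|).
    exact: measurable_funM.
  move=> y; rewrite normrM; have /andP[h0 h1] := h01 y.
  rewrite [`|h y|]ger0_norm //; apply: ler_piMr => //.
rewrite RintegralZl // Rintegral_cst // [fine _](_ : _ = 1) ?mulr1 //.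
exact: (congr1 fine (probability_setT P)).
Qed.

Lemma Rint_aff_le (P : probability Y R) (h1 h2 : Y -> R) c1 k1 c2 k2 :
  measurable_fun setT h1 -> measurable_fun setT h2 ->
  (forall y, 0 <= h1 y <= 1) -> (forall y, 0 <= h2 y <= 1) ->
  (forall y, c1 + k1 * h1 y <= c2 + k2 * h2 y) ->
  c1 + k1 * fine (\int[P]_y (h1 y)%:E)%E <= c2 + k2 * fine (\int[P]_y (h2 y)%:E)%E.
Proof.
move=> m1 m2 b1 b2 H.
rewrite -!Rint_aff //.
change (Rintegral P setT (fun y => c1 + k1 * h1 y) <=
        Rintegral P setT (fun y => c2 + k2 * h2 y)).
apply: le_Rintegral => //.
- apply: (@bnd_intC P _ (`|c1| + `|k1|)).
    by apply: measurable_funD => //; apply: measurable_funM.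
  move=> y; apply: (le_trans (ler_normD _ _)); apply: lerD => //.
  have /andP[h0 h1'] := b1 y; rewrite normrM [`|h1 y|]ger0_norm //.
  exact: ler_piMr.
- apply: (@bnd_intC P _ (`|c2| + `|k2|)).
    by apply: measurable_funD => //; apply: measurable_funM.
  move=> y; apply: (le_trans (ler_normD _ _)); apply: lerD => //.
  have /andP[h0 h1'] := b2 y; rewrite normrM [`|h2 y|]ger0_norm //.
  exact: ler_piMr.
Qed.

End aux.

Lemma lce_le (R : realType) (f1 f2 : R -> R) a b : 0 <= b ->
  (forall g : R -> R, convex_function (E := R^o) `[0, 1] g ->
     (forall t, t \in `[0, 1] -> g t <= Num.min (f1 t) (f2 t)) -> g a <= b) ->
  lce f1 f2 a <= b.
Proof.
move=> b0 H; rewrite /lce.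
set S := [set v | _].
have [/eqP S0|S0] := boolP (S == set0); first by rewrite S0 sup0.
apply: ge_sup; first by apply/set0P.
by move=> _ [g [cg hg ->]]; exact: H.
Qed.

Section restr.
Context (T : finType) (D D' : dataset T) (x : T).
Hypothesis hx : (forall y, D' y = (D y + (y == x))%N) \/ (forall y, D y = (D' y + (y == x))%N).

Lemma restr_eq (S : {set T}) : x \notin S -> restr D S = restr D' S.
Proof.
move=> xS; apply/ffunP => y; rewrite !ffunE; case: ifP => // yS.
have /negbTE yx : y != x by apply: contraNneq xS => <-.
by case: hx => h; rewrite h yx addn0.
Qed.

Lemma restr_nb (S : {set T}) : x \in S -> neighbors (restr D S) (restr D' S).
Proof.
move=> xS; exists x; case: hx => h; [left|right] => y; rewrite !ffunE;
  (case: ifP => yS; [by rewrite h|]);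
  have /negbTE -> : y != x by apply: contraFneq yS => ->.
all: by [].
Qed.
End restr.

End Helpers.
Import Helpers.

Theorem theorem5 (R : realType) (T : finType) (S1 S2 : {set T})
    (d1 d2 : measure_display) (Y1 : measurableType d1) (Y2 : measurableType d2)
    (f1 f2 : R -> R)
    (M1 : dataset T -> probability Y1 R)
    (M2 : Y1 -> dataset T -> probability Y2 R) :
  [disjoint S1 & S2] ->
  is_tradeoff f1 -> is_tradeoff f2 ->
  (* M2 is measurable in its auxiliary argument (a Markov kernel) *)
  aux_measurable M2 ->
  fDP f1 (fun D => (M1 D : set Y1 -> \bar R)) ->
  (forall y1 : Y1, fDP f2 (fun D => (M2 y1 D : set Y2 -> \bar R))) ->
  fDP (lce f1 f2) (joint_mech M1 M2 S1 S2).
Proof.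
move=> hdis htr1 htr2 hmeas hM1 hM2 D D' [x hx] a ha.
have /andP[a0 a1] : 0 <= a <= 1 by move: ha; rewrite in_itv.
pose alpha (phi : Y1 * Y2 -> R) (E : dataset T) (y : Y1) :=
  fine (\int[M2 y (restr E S2)]_z (phi (y, z))%:E)%E.
have mphiy (phi : Y1 * Y2 -> R) y : measurable_fun setT phi ->
    measurable_fun setT (fun z => phi (y, z)).
  by move=> mphi; exact: (measurableT_comp mphi (pair1_measurable y)).
have alpha01 (phi : Y1 * Y2 -> R) E y : measurable_fun setT phi ->
    (forall z, 0 <= phi z <= 1) -> 0 <= alpha phi E y <= 1.
  move=> mphi phi01; apply: Rint01; first exact: mphiy.
  by move=> z; exact: phi01.
have malpha (phi : Y1 * Y2 -> R) E : measurable_fun setT phi ->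
    (forall z, 0 <= phi z <= 1) -> measurable_fun setT (alpha phi E).
  move=> mphi phi01.
  have := measurable_fun_integral_finite_kernel (EFin \o phi) (K2 (hmeas (restr E S2))) _ _.
  move=> /(_ _ _) h.
  apply: (measurableT_comp (fine_measurable measurableT)).
  apply: h.
  - by move=> z; rewrite lee_fin; case/andP: (phi01 z).
  - exact/measurable_EFinP.
have JMR (phi : Y1 * Y2 -> R) E : measurable_fun setT phi ->
    (forall z, 0 <= phi z <= 1) ->
    fine (\int[joint_mech M1 M2 S1 S2 E]_z (phi z)%:E)%E =
    fine (\int[M1 (restr E S1)]_y (alpha phi E y)%:E)%E.
  move=> mphi phi01.
  rewrite /joint_mech (JM_int (hmeas (restr E S2)) (M1 (restr E S1)) mphi); last first.
    by move=> z; case/andP: (phi01 z).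
  congr (fine _); apply: eq_integral => y _; rewrite fineK //.
  apply: (integrable_fin_num measurableT).
  apply: bnd_int; first exact: mphiy.
  by move=> z; exact: phi01.
have cst01 : forall z : Y1 * Y2, 0 <= (cst 0 : Y1 * Y2 -> R) z <= 1.
  by move=> z; rewrite lexx ler01.
have Z E : fine (\int[joint_mech M1 M2 S1 S2 E]_z ((cst 0 : Y1 * Y2 -> R) z)%:E)%E = 0.
  rewrite (JMR _ E (measurable_cst _) cst01).
  rewrite (_ : alpha _ E = cst 0); first by rewrite Rint_cst.
  by apply/funext => y; rewrite /alpha Rint_cst.
apply: lb_le_inf.
  exists 1; exists (cst 0); split.
  - exact: measurable_cst.
  - exact: cst01.
  - by rewrite Z.
  - by rewrite Z subr0.
move=> _ [phi [mphi phi01 hPa ->]].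
rewrite JMR // in hPa; rewrite JMR //.
have beta0 : 0 <= 1 - fine (\int[M1 (restr D' S1)]_y (alpha phi D' y)%:E)%E.
  have /andP[_ ] := Rint01 (M1 (restr D' S1)) (malpha phi D' mphi phi01)
    (fun y => alpha01 phi D' y mphi phi01).
  lra.
have mal E := malpha phi E mphi phi01.
have al01 E y := alpha01 phi E y mphi phi01.
have [xS2|xS2] := boolP (x \in S2); last first.
  have e2 := restr_eq hx xS2.
  have eal : alpha phi D' = alpha phi D by rewrite /alpha e2.
  rewrite eal in beta0 *.
  have hf1 : f1 a <= 1 - fine (\int[M1 (restr D' S1)]_y (alpha phi D y)%:E)%E.
    have [xS1|xS1] := boolP (x \in S1).
      apply: le_trans (hM1 _ _ (restr_nb hx xS1) a ha) _.
      exact: trade_le.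
    rewrite -(restr_eq hx xS1).
    have [_ h] := tradeoff_props htr1 ha; lra.
  apply: lce_le => // g _ hg.
  have := hg a ha; rewrite le_min => /andP[h _]; lra.
have xS1 : x \notin S1 by rewrite (disjointFl hdis xS2).
have e1 := restr_eq hx xS1.
rewrite -e1 in beta0 *.
set mu := M1 (restr D S1) in hPa beta0 *.
have nb2 := restr_nb hx xS2.
have hb y : f2 (alpha phi D y) <= 1 - alpha phi D' y.
  have hay : alpha phi D y \in `[0, 1] by rewrite in_itv /=; exact: al01.
  apply: le_trans (hM2 y _ _ nb2 (alpha phi D y) hay) _.
  apply: trade_le; first exact: mphiy.
    by move=> z; exact: phi01.
  exact: lexx.
apply: lce_le => // g cg hg.
pose m t := Num.max (g t) 0.
have cgI := conv_ext cg.
have cm : convI m.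
  move=> u v t hu hv ht; rewrite /m.
  have := cgI u v t hu hv ht.
  have hgu : g u <= Num.max (g u) 0 by rewrite le_max lexx.
  have hgv : g v <= Num.max (g v) 0 by rewrite le_max lexx.
  have hu0 : 0 <= Num.max (g u) 0 by rewrite le_max lexx orbT.
  have hv0 : 0 <= Num.max (g v) 0 by rewrite le_max lexx orbT.
  move: hgu hgv hu0 hv0 ht.
  set Gu := Num.max (g u) 0; set Gv := Num.max (g v) 0.
  move=> hgu hgv hu0 hv0 /andP[t0 t1] hc.
  rewrite ge_max; apply/andP; split; nra.
have mf2 t : 0 <= t <= 1 -> m t <= f2 t.
  move=> ht; have ht' : t \in `[0, 1] by rewrite in_itv.
  have [f20 _] := tradeoff_props htr2 ht'.
  have := hg t ht'; rewrite le_min => /andP[_ h].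
  by rewrite /m ge_max h f20.
have hm y : m (alpha phi D y) <= 1 - alpha phi D' y.
  exact: le_trans (mf2 _ (al01 D y)) (hb y).
have g1 : g 1 <= 0.
  have h1 : (1 : R) \in `[0, 1] by rewrite in_itv /= lexx ler01.
  have [_ h] := tradeoff_props htr1 h1.
  have := hg 1 h1; rewrite le_min => /andP[h' _]; lra.
have [ga0|ga0] := leP (g a) 0; first exact: le_trans ga0 beta0.
have a1' : a < 1.
  rewrite lt_neqAle a1 andbT; apply/eqP => ae; rewrite ae in ga0; lra.
have hma : g a <= m a by rewrite /m le_max lexx.
have hb01 y := al01 D' y.
move: a0; rewrite le_eqVlt => /predU1P[a0e|apos].
  have /andP[hal0 _] := Rint01 mu (mal D) (al01 D).
  have hal : fine (\int[mu]_y (alpha phi D y)%:E)%E = 0 by rewrite -a0e in hPa; lra.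
  have fin := integrable_fin_num measurableT (bnd_int mu (mal D) (al01 D)).
  have hE : (\int[mu]_y (alpha phi D y)%:E = 0)%E by rewrite -(fineK fin) hal.
  have : ae_eq mu setT (EFin \o alpha phi D) (cst 0%E).
    apply/(ae_eq_integral_abs mu measurableT); first exact/measurable_EFinP.
    rewrite -hE; apply: eq_integral => y _ /=.
    by rewrite ger0_norm //; case/andP: (al01 D y).
  move=> [N [mN N0 subN]].
  have ind01 y : 0 <= (\1_N y : R) <= 1.
    by rewrite indicE; case: (y \in N); rewrite /= ?lexx ?ler01.
  have := @Rint_aff_le _ _ _ mu (\1_N) (alpha phi D') (g a) (- g a) 1 (-1)
    (@measurable_indic _ _ R setT N mN) (mal D') ind01 (al01 D').
  move=> /(_ _) H.
  have {}H : g a + - g a * fine (\int[mu]_y (\1_N y)%:E)%E <=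
      1 + -1 * fine (\int[mu]_y (alpha phi D' y)%:E)%E.
    apply: H => y.
    have /andP[hb0 hb1] := al01 D' y.
    rewrite indicE; case: (boolP (y \in N)) => yN.
      by rewrite mulr1; lra.
    have Py : (alpha phi D y)%:E = 0%E.
      apply: contrapT => hne; move/negP: yN; apply; rewrite inE.
      by apply: subN => /= /(_ I).
    move: Py => [ay].
    have := hm y; rewrite ay a0e => hmy.
    rewrite mulr0 addr0; lra.
  move: H; rewrite integral_indic // setIT N0 /=; lra.
have m1a : m 1 <= m a.
  rewrite /m (_ : Num.max (g 1) 0 = 0); last by apply/max_idPr.
  by rewrite le_max lexx orbT.
have [s [s0 hs]] := support_line cm apos a1' m1a.
have := @Rint_aff_le _ _ _ mu (alpha phi D) (alpha phi D') (m a - s * a) s 1 (-1)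
  (mal D) (mal D') (al01 D) (al01 D').
move=> /(_ _) H.
have := H ltac:(move=> y; have := hs _ (al01 D y); have := hm y; lra).
nra.
Qed.
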